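(* Let $n\ge2$, $r>0$, $\varepsilon_r>0$, $\rho^*>0$, $\omega^*\in\mathbb R$, $k_\rho,k_z,k_\phi>0$. Consider the closed-loop system, for $i=1,\dots,n$, $$\dot\rho_i=\lambda(\rho_i,\sigma(t))\,k_\rho(\rho^*-\rho_i),\qquad \dot\phi_i=\omega^*+k_\phi(\bar\phi_i-\phi_i),\qquad \dot z_i=-k_zz_i,$$ where $\sigma(t)=r/|\sin(\delta_{\min}(t)/2)|$, $\delta_{\min}(t)=\min_k\delta_k(t)$, and $$\lambda(\rho,\sigma)=\begin{cases}0 & \rho<\sigma+2r,\\ 1 & \rho>\sigma+2r+\varepsilon_r,\\ (\rho-\sigma-2r)/\varepsilon_r & \text{otherwise.}\end{cases}$$ Assume $\delta_k(t_0)>0$ for all $k$. Then: (1) if $\rho_i(t_0)>\frac{r}{|\sin(\pi/n)|}+2r$ for all $i$ and $|\rho_i(t_0)-\rho_j(t_0)|\ge2r$ for all $i\neq j$, then $D_{ij}(t)>2r$ for all $i\ne j$ and all $t\ge t_0$ (no collisions); (2) for every initial condition, $\phi_i-\bar\phi_i\to0$, $\dot\phi_i\to\omega^*$ and $z_i\to0$ exponentially for all $i$; moreover, if in addition $\rho^*>\frac{r}{|\sin(\pi/n)|}+2r$ and $\rho_i(t_0)>\frac{r}{|\sin(\pi/n)|}+2r$ and $|\rho_i(t_0)-\rho_j(t_0)|\ge 2r$ for all $j\ne i$, then $\rho_i\to\rho^*$ exponentially.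
   Context: Robots have cylindrical coordinates $(\rho_i,\phi_i,z_i)$ (radius, phase, height) relative to a target frame, with dynamics after feedback transformation $\dot\rho_i,\dot\phi_i,\dot z_i$ equal to free inputs. Phases are real-valued (not reduced modulo $2\pi$), robots indexed counterclockwise at $t_0$. Phase averages: $\bar\phi_1=\frac{\phi_2+\phi_n-2\pi}{2}$, $\bar\phi_i=\frac{\phi_{i+1}+\phi_{i-1}}{2}$ for $2\le i\le n-1$, $\bar\phi_n=\frac{\phi_1+2\pi+\phi_{n-1}}{2}$. Consecutive phase differences: $\delta_1=\phi_1-\phi_n+2\pi$, $\delta_k=\phi_k-\phi_{k-1}$ for $2\le k\le n$. Distance $D_{ij}=\sqrt{\rho_i^2+\rho_j^2-2\rho_i\rho_j\cos(\phi_j-\phi_i)+(z_j-z_i)^2}$; a collision means $D_{ij}\le 2r$, with $r$ the safety radius. *)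

(* Defs.v *)
(* classical reals. Robots indexed 1..n. *)
From Stdlib Require Import Reals List.
Import ListNotations.
Open Scope R_scope.

Definition phibar (n : nat) (phi : nat -> R -> R) (i : nat) (t : R) : R :=
  if Nat.eqb i 1 then (phi 2%nat t + phi n t - 2 * PI) / 2
  else if Nat.eqb i n then (phi 1%nat t + 2 * PI + phi (n - 1)%nat t) / 2
  else (phi (i + 1)%nat t + phi (i - 1)%nat t) / 2.

Definition delta (n : nat) (phi : nat -> R -> R) (k : nat) (t : R) : R :=
  if Nat.eqb k 1 then phi 1%nat t - phi n t + 2 * PI
  else phi k t - phi (k - 1)%nat t.

Definition delta_min (n : nat) (phi : nat -> R -> R) (t : R) : R :=
  fold_right Rmin (delta n phi 1%nat t) (map (fun k => delta n phi k t) (seq 1 n)).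

Definition sigma (r : R) (n : nat) (phi : nat -> R -> R) (t : R) : R :=
  r / Rabs (sin (delta_min n phi t / 2)).

Definition lam (r eps_r rho sig : R) : R :=
  if Rlt_dec rho (sig + 2 * r) then 0
  else if Rlt_dec (sig + 2 * r + eps_r) rho then 1
  else (rho - sig - 2 * r) / eps_r.

Definition Dist (rhoi phii zi rhoj phij zj : R) : R :=
  sqrt (rhoi ^ 2 + rhoj ^ 2 - 2 * rhoi * rhoj * cos (phij - phii) + (zj - zi) ^ 2).

Definition right_cont_at (f : R -> R) (t0 : R) : Prop :=
  forall eps, 0 < eps -> exists d, 0 < d /\
    forall t, t0 <= t < t0 + d -> Rabs (f t - f t0) < eps.

Definition exp_conv (f : R -> R) (L t0 : R) : Prop :=
  exists C a, 0 < a /\ forall t, t0 <= t -> Rabs (f t - L) <= C * exp (- a * (t - t0)).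

Definition closed_loop_solution (n : nat) (r eps_r rhostar omega krho kz kphi t0 : R)
    (rho phi z : nat -> R -> R) : Prop :=
  forall i, (1 <= i <= n)%nat ->
    right_cont_at (rho i) t0 /\ right_cont_at (phi i) t0 /\ right_cont_at (z i) t0 /\
    forall t, t0 < t ->
      derivable_pt_lim (rho i) t
        (lam r eps_r (rho i t) (sigma r n phi t) * krho * (rhostar - rho i t)) /\
      derivable_pt_lim (phi i) t (omega + kphi * (phibar n phi i t - phi i t)) /\
      derivable_pt_lim (z i) t (- kz * z i t).

(* Main.v *)
Require Import Defs.
From Stdlib Require Import Reals List.
Open Scope R_scope.
From Stdlib Require Import Lra Lia Arith.


Lemma cont_eps (g : R -> R) x : continuity_pt g x ->
  forall eps, 0 < eps -> exists d, 0 < d /\ forall y, Rabs (y - x) < d -> Rabs (g y - g x) < eps.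
Proof.
  intros H eps He. destruct (H eps He) as [d [Hd Hy]].
  exists d. split; auto. intros y Hyx.
  destruct (Req_dec y x) as [->|Hne].
  - rewrite Rminus_diag, Rabs_R0; auto.
  - apply (Hy y). split. split; auto. exact I. auto.
Qed.

Lemma rc_cont g a : continuity_pt g a -> right_cont_at g a.
Proof.
  intros H eps He. destruct (cont_eps g a H eps He) as [d [Hd Hy]].
  exists d; split; auto. intros t Ht. apply Hy. rewrite Rabs_right; lra.
Qed.

Lemma rc_comp g f a : right_cont_at f a -> continuity_pt g (f a) ->
  right_cont_at (fun t => g (f t)) a.
Proof.
  intros Hf Hg eps He. destruct (cont_eps g (f a) Hg eps He) as [d [Hd Hy]].
  destruct (Hf d Hd) as [d' [Hd' H']]. exists d'; split; [exact Hd'|].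
  intros t Ht. apply Hy. apply H'; auto.
Qed.

Lemma rc_plus f g a : right_cont_at f a -> right_cont_at g a ->
  right_cont_at (fun t => f t + g t) a.
Proof.
  intros Hf Hg eps He.
  destruct (Hf (eps/2)) as [d1 [Hd1 H1]]; [lra|].
  destruct (Hg (eps/2)) as [d2 [Hd2 H2]]; [lra|].
  exists (Rmin d1 d2); split. apply Rmin_glb_lt; auto.
  intros t Ht. pose proof (Rmin_l d1 d2). pose proof (Rmin_r d1 d2).
  specialize (H1 t ltac:(lra)). specialize (H2 t ltac:(lra)).
  replace (f t + g t - (f a + g a)) with ((f t - f a) + (g t - g a)) by ring.
  eapply Rle_lt_trans. apply Rabs_triang. lra.
Qed.

Lemma rc_const c a : right_cont_at (fun _ => c) a.
Proof. apply rc_cont. apply continuity_pt_const. intros x y; reflexivity. Qed.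

Lemma rc_mult f g a : right_cont_at f a -> right_cont_at g a ->
  right_cont_at (fun t => f t * g t) a.
Proof.
  intros Hf Hg eps He.
  set (M := Rabs (f a) + Rabs (g a) + 1).
  assert (HM : 0 < M) by (unfold M; pose proof (Rabs_pos (f a)); pose proof (Rabs_pos (g a)); lra).
  set (e := Rmin 1 (eps / (2 * M))).
  assert (He1 : 0 < e) by (apply Rmin_glb_lt; [lra| apply Rdiv_lt_0_compat; lra]).
  destruct (Hf e He1) as [d1 [Hd1 H1]].
  destruct (Hg e He1) as [d2 [Hd2 H2]].
  exists (Rmin d1 d2); split. apply Rmin_glb_lt; auto.
  intros t Ht. pose proof (Rmin_l d1 d2). pose proof (Rmin_r d1 d2).
  specialize (H1 t ltac:(lra)). specialize (H2 t ltac:(lra)).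
  assert (Hee : e <= 1) by apply Rmin_l.
  assert (Hee2 : e <= eps / (2*M)) by apply Rmin_r.
  replace (f t * g t - f a * g a) with ((f t - f a) * (g t - g a) + (f t - f a) * g a + f a * (g t - g a)) by ring.
  assert (Hx : e * M <= eps / 2).
  { apply Rle_trans with (eps/(2*M) * M). apply Rmult_le_compat_r; lra.
    right; field; lra. }
  pose proof (Rabs_pos (f a)); pose proof (Rabs_pos (g a)).
  pose proof (Rabs_pos (f t - f a)); pose proof (Rabs_pos (g t - g a)).
  eapply Rle_lt_trans. apply Rabs_triang.
  eapply Rle_lt_trans. apply Rplus_le_compat_r. apply Rabs_triang.
  rewrite !Rabs_mult.
  assert (Rabs (f t - f a) * Rabs (g t - g a) <= e * e) by (apply Rmult_le_compat; lra).
  assert (Rabs (f t - f a) * Rabs (g a) <= e * Rabs (g a)) by (apply Rmult_le_compat_r; lra).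
  assert (Rabs (f a) * Rabs (g t - g a) <= Rabs (f a) * e) by (apply Rmult_le_compat_l; lra).
  assert (e * e <= e * 1) by (apply Rmult_le_compat_l; lra).
  unfold M in Hx. nra.
Qed.


Lemma dmult f g x a b : derivable_pt_lim f x a -> derivable_pt_lim g x b ->
  derivable_pt_lim (fun y => f y * g y) x (a * g x + f x * b).
Proof. intros. apply (derivable_pt_lim_mult f g x a b); auto. Qed.
Lemma dplus f g x a b : derivable_pt_lim f x a -> derivable_pt_lim g x b ->
  derivable_pt_lim (fun y => f y + g y) x (a + b).
Proof. intros. apply (derivable_pt_lim_plus f g x a b); auto. Qed.
Lemma dminus f g x a b : derivable_pt_lim f x a -> derivable_pt_lim g x b ->
  derivable_pt_lim (fun y => f y - g y) x (a - b).
Proof. intros. apply (derivable_pt_lim_minus f g x a b); auto. Qed.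
Lemma dconst c x : derivable_pt_lim (fun _ => c) x 0.
Proof. apply derivable_pt_lim_const. Qed.
Lemma did x : derivable_pt_lim (fun y => y) x 1.
Proof. apply derivable_pt_lim_id. Qed.
Lemma dcomp (f g : R -> R) x a b : derivable_pt_lim f x a -> derivable_pt_lim g (f x) b ->
  derivable_pt_lim (fun y => g (f y)) x (b * a).
Proof. intros. apply (derivable_pt_lim_comp f g x a b); auto. Qed.
Lemma dext f x a b : derivable_pt_lim f x a -> a = b -> derivable_pt_lim f x b.
Proof. intros H ->; auto. Qed.

Lemma dcont f x l : derivable_pt_lim f x l -> continuity_pt f x.
Proof. intros H. apply derivable_continuous_pt. exists l; exact H. Qed.

Lemma decay (f f' : R -> R) (c a b : R) : a <= b ->
  (forall s, a < s <= b -> derivable_pt_lim f s (f' s)) ->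
  (forall s, a < s <= b -> f' s <= - c * f s) ->
  right_cont_at f a -> f b <= f a * exp (- c * (b - a)).
Proof.
  intros Hab Hd Hle Hrc.
  destruct (Req_dec a b) as [<-|Hne].
  { replace (- c * (a - a)) with 0 by ring. rewrite exp_0. lra. }
  set (h := fun s => f s * exp (c * (s - a))).
  set (h' := fun s => f' s * exp (c * (s - a)) + f s * (c * exp (c * (s - a)))).
  assert (Hhd : forall s, a < s <= b -> derivable_pt_lim h s (h' s)).
  { intros s Hs. unfold h, h'. eapply dext. apply dmult. apply Hd; auto.
    apply (dcomp (fun s => c * (s - a)) exp). apply dmult. apply dconst. apply dminus. apply did. apply dconst.
    apply derivable_pt_lim_exp. cbv beta; ring. }
  assert (Hmono : forall s, a < s < b -> h b <= h s).
  { intros s Hs. destruct (MVT_cor2 h h' s b ltac:(lra)) as [x [Hx1 Hx2]].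
    { intros x Hx. apply Hhd. lra. }
    assert (h' x <= 0).
    { unfold h'. specialize (Hle x ltac:(lra)). pose proof (exp_pos (c * (x - a))). nra. }
    nra. }
  assert (Hrch : right_cont_at h a).
  { unfold h. apply rc_mult; auto. apply rc_cont. eapply dcont.
    apply (dcomp (fun s => c * (s - a)) exp). apply dmult. apply dconst. apply dminus. apply did. apply dconst.
    apply derivable_pt_lim_exp. }
  assert (Hha : h b <= h a).
  { destruct (Rle_dec (h b) (h a)) as [H|H]; auto. exfalso.
    destruct (Hrch (h b - h a) ltac:(lra)) as [d [Hd0 Hd1]].
    set (s := a + Rmin d (b - a) / 2).
    assert (Hs1 : a < s < b). { unfold s. pose proof (Rmin_l d (b-a)); pose proof (Rmin_r d (b-a)).
      assert (0 < Rmin d (b-a)) by (apply Rmin_glb_lt; lra). lra. }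
    assert (Hs2 : a <= s < a + d). { unfold s. pose proof (Rmin_l d (b-a)).
      assert (0 < Rmin d (b-a)) by (apply Rmin_glb_lt; lra). lra. }
    specialize (Hd1 s Hs2). specialize (Hmono s Hs1).
    apply Rabs_def2 in Hd1. lra. }
  unfold h in Hha. replace (c * (a - a)) with 0 in Hha by ring. rewrite exp_0 in Hha.
  replace (f b) with (f b * exp (c * (b - a)) * exp (- c * (b - a))).
  2:{ rewrite Rmult_assoc, <- exp_plus. replace (c * (b - a) + - c * (b - a)) with 0 by ring.
      rewrite exp_0; ring. }
  apply Rmult_le_compat_r. left; apply exp_pos. lra.
Qed.

Fixpoint sm (f : nat -> R) (n : nat) : R :=
  match n with O => 0 | S m => sm f m + f m end.

Lemma sm_ext f g n : (forall k, (k < n)%nat -> f k = g k) -> sm f n = sm g n.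
Proof. induction n; simpl; intros H; auto. rewrite IHn, H; auto; intros; apply H; lia. Qed.

Lemma sm_plus f g n : sm (fun k => f k + g k) n = sm f n + sm g n.
Proof. induction n; simpl; [ring|rewrite IHn; ring]. Qed.
Lemma sm_minus f g n : sm (fun k => f k - g k) n = sm f n - sm g n.
Proof. induction n; simpl; [ring|rewrite IHn; ring]. Qed.
Lemma sm_scal c f n : sm (fun k => c * f k) n = c * sm f n.
Proof. induction n; simpl; [ring|rewrite IHn; ring]. Qed.
Lemma sm_const c n : sm (fun _ => c) n = INR n * c.
Proof. induction n; simpl sm; [simpl; ring|rewrite IHn, S_INR; ring]. Qed.
Lemma sm_le f g n : (forall k, (k < n)%nat -> f k <= g k) -> sm f n <= sm g n.
Proof. induction n; simpl; intros H; [lra|]. apply Rplus_le_compat; [apply IHn; intros; apply H; lia| apply H; lia]. Qed.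
Lemma sm_nonneg f n : (forall k, (k < n)%nat -> 0 <= f k) -> 0 <= sm f n.
Proof. intros H. replace 0 with (sm (fun _ => 0) n). apply sm_le; auto. rewrite sm_const; ring. Qed.
Lemma sm_term_le f n k : (forall k, (k < n)%nat -> 0 <= f k) -> (k < n)%nat -> f k <= sm f n.
Proof.
  induction n; intros H Hk; [lia|]. simpl.
  destruct (Nat.eq_dec k n) as [->|Hne].
  - pose proof (sm_nonneg f n ltac:(intros; apply H; lia)). lra.
  - pose proof (H n ltac:(lia)). pose proof (IHn ltac:(intros; apply H; lia) ltac:(lia)). lra.
Qed.
Lemma sm_mono f n m : (forall k, (k < m)%nat -> 0 <= f k) -> (n <= m)%nat -> sm f n <= sm f m.
Proof.
  intros H Hnm. induction Hnm; [lra|]. simpl. pose proof (H m ltac:(lia)).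
  assert (sm f n <= sm f m) by (apply IHHnm; intros; apply H; lia). lra.
Qed.
Lemma sm_abs f n : Rabs (sm f n) <= sm (fun k => Rabs (f k)) n.
Proof. induction n; simpl. rewrite Rabs_R0; lra. eapply Rle_trans. apply Rabs_triang. lra. Qed.
Lemma sm_tele f n : sm (fun k => f (S k) - f k) n = f n - f O.
Proof. induction n; simpl; [ring|rewrite IHn; ring]. Qed.
Lemma sm_shift f n : (forall k, f (k + n)%nat = f k) -> sm (fun k => f (S k)) n = sm f n.
Proof.
  intros H. assert (E : sm (fun k => f (S k) - f k) n = 0).
  { rewrite sm_tele. rewrite <- (H O). simpl. ring. }
  rewrite sm_minus in E. lra.
Qed.

Lemma sm_deriv (F F' : nat -> R -> R) n t :
  (forall k, (k < n)%nat -> derivable_pt_lim (F k) t (F' k t)) ->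
  derivable_pt_lim (fun s => sm (fun k => F k s) n) t (sm (fun k => F' k t) n).
Proof.
  induction n; intros H; simpl.
  - apply dconst.
  - apply dplus. apply IHn; intros; apply H; lia. apply H; lia.
Qed.

Lemma sm_rc (F : nat -> R -> R) n a :
  (forall k, (k < n)%nat -> right_cont_at (F k) a) ->
  right_cont_at (fun s => sm (fun k => F k s) n) a.
Proof.
  induction n; intros H; simpl.
  - apply rc_const.
  - apply rc_plus. apply IHn; intros; apply H; lia. apply H; lia.
Qed.

Definition periodic (f : nat -> R) (n : nat) := forall k, f (k + n)%nat = f k.

Lemma cyc_id f n : (1 <= n)%nat -> periodic f n ->
  sm (fun k => f k * (f (S k) - 2 * f k + f (k + n - 1)%nat)) n
  = - sm (fun k => (f (S k) - f k) ^ 2) n.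
Proof.
  intros Hn Hp.
  assert (HB : sm (fun k => f k * f (k + n - 1)%nat) n = sm (fun k => f (S k) * f k) n).
  { rewrite <- (sm_shift (fun k => f k * f (k + n - 1)%nat)).
    - apply sm_ext; intros k _. replace (S k + n - 1)%nat with (k + n)%nat by lia. rewrite Hp; ring.
    - intros k. replace (k + n + n - 1)%nat with ((k + n - 1) + n)%nat by lia. rewrite !Hp; auto. }
  assert (HC : sm (fun k => f (S k) ^ 2) n = sm (fun k => f k ^ 2) n).
  { apply (sm_shift (fun k => f k ^ 2)). intros k; rewrite Hp; auto. }
  transitivity (sm (fun k => f k * f (S k)) n + sm (fun k => f k * f (k + n - 1)%nat) n - 2 * sm (fun k => f k ^ 2) n).
  { rewrite <- sm_scal, <- sm_plus, <- sm_minus. apply sm_ext; intros; ring. }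
  transitivity (- (sm (fun k => f (S k) ^ 2) n - 2 * sm (fun k => f k * f (S k)) n + sm (fun k => f k ^ 2) n)).
  { rewrite HB, HC. replace (sm (fun k => f (S k) * f k) n) with (sm (fun k => f k * f (S k)) n). ring.
    apply sm_ext; intros; ring. }
  f_equal. rewrite <- sm_scal, <- sm_minus, <- sm_plus. apply sm_ext; intros; ring.
Qed.

Lemma poincare f n : (1 <= n)%nat -> periodic f n -> sm f n = 0 ->
  sm (fun k => f k ^ 2) n <= 4 * INR n ^ 3 * sm (fun k => (f (S k) - f k) ^ 2) n.
Proof.
  intros Hn Hp H0.
  set (h := fun m => f (S m) - f m).
  set (Q := sm (fun k => h k ^ 2) n).
  assert (HQ0 : 0 <= Q) by (apply sm_nonneg; intros; apply pow2_ge_0).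
  assert (Hh : forall m, (m < n)%nat -> Rabs (h m) <= sqrt Q).
  { intros m Hm. rewrite <- sqrt_Rsqr_abs. apply sqrt_le_1_alt. rewrite Rsqr_pow2.
    apply (sm_term_le (fun k => h k ^ 2)); auto. intros; apply pow2_ge_0. }
  set (Sa := sm (fun k => Rabs (h k)) n).
  assert (HS : Sa <= INR n * sqrt Q).
  { unfold Sa. rewrite <- sm_const. apply sm_le; auto. }
  assert (Hf0 : forall j, (j <= n)%nat -> Rabs (f j - f O) <= Sa).
  { intros j Hj. rewrite <- sm_tele. eapply Rle_trans. apply sm_abs.
    apply sm_mono; auto. intros; apply Rabs_pos. }
  assert (Hkj : forall k j, (k <= n)%nat -> (j <= n)%nat -> Rabs (f k - f j) <= 2 * Sa).
  { intros k j Hk Hj. replace (f k - f j) with ((f k - f O) + - (f j - f O)) by ring.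
    eapply Rle_trans. apply Rabs_triang. rewrite Rabs_Ropp. pose proof (Hf0 k Hk); pose proof (Hf0 j Hj); lra. }
  assert (Hnpos : 0 < INR n) by (apply lt_0_INR; lia).
  assert (Hk : forall k, (k < n)%nat -> Rabs (f k) <= 2 * Sa).
  { intros k Hk. 
    assert (E : INR n * f k = sm (fun j => f k - f j) n).
    { rewrite sm_minus, sm_const, H0. ring. }
    assert (Rabs (INR n * f k) <= INR n * (2 * Sa)).
    { rewrite E. eapply Rle_trans. apply sm_abs. rewrite <- sm_const. apply sm_le. intros; apply Hkj; lia. }
    rewrite Rabs_mult, (Rabs_right (INR n)) in H by lra.
    apply Rmult_le_reg_l with (INR n); auto. }
  assert (Hsq : forall k, (k < n)%nat -> f k ^ 2 <= 4 * INR n ^ 2 * Q).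
  { intros k Hk'. specialize (Hk k Hk'). pose proof (Rabs_pos (f k)).
    assert (HsQ : sqrt Q * sqrt Q = Q) by (apply sqrt_sqrt; auto).
    pose proof (sqrt_pos Q).
    assert (Rabs (f k) <= 2 * INR n * sqrt Q) by nra.
    assert (Hm : Rabs (f k) * Rabs (f k) <= (2 * INR n * sqrt Q) * (2 * INR n * sqrt Q)) by (apply Rmult_le_compat; lra).
    rewrite <- Rabs_mult in Hm. rewrite Rabs_right in Hm by nra. nra. }
  eapply Rle_trans. apply sm_le. exact Hsq. rewrite sm_const. unfold Q, h. right; ring.
Qed.

Definition Dd n phi k t := delta n phi (S (k mod n)) t.
Definition gg n phi k t := Dd n phi (S k) t - Dd n phi k t.

Lemma Dd_small n phi k : (k < n)%nat -> Dd n phi k = delta n phi (S k).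
Proof. intros H. unfold Dd. rewrite Nat.mod_small; auto. Qed.

Lemma Dd_n n phi : Dd n phi n = Dd n phi 0.
Proof. unfold Dd. rewrite Nat.Div0.mod_same, Nat.Div0.mod_0_l. auto. Qed.

Lemma Dd_per n phi k : Dd n phi (k + n) = Dd n phi k.
Proof. unfold Dd. replace (k + n)%nat with (k + 1 * n)%nat by lia. rewrite Nat.Div0.mod_add. auto. Qed.

Lemma gg_per n phi k : gg n phi (k + n) = gg n phi k.
Proof. unfold gg. replace (S (k + n)) with (S k + n)%nat by lia. rewrite !Dd_per. auto. Qed.

Lemma gg_per_t n phi t : periodic (fun k => gg n phi k t) n.
Proof. intros k. rewrite gg_per. auto. Qed.

Lemma Dd_per_t n phi t : periodic (fun k => Dd n phi k t) n.
Proof. intros k. rewrite Dd_per. auto. Qed.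

Lemma delta_1 n phi t : delta n phi 1 t = phi 1%nat t - phi n t + 2 * PI.
Proof. reflexivity. Qed.
Lemma delta_S n phi k t : (1 <= k)%nat -> delta n phi (S k) t = phi (S k) t - phi k t.
Proof. intros H. unfold delta. destruct k; [lia|]. simpl. replace (k - 0)%nat with k by lia. reflexivity. Qed.

Lemma psi_eq n phi j t : (2 <= n)%nat -> (1 <= j <= n)%nat ->
  phibar n phi j t - phi j t = gg n phi (j - 1) t / 2.
Proof.
  intros Hn Hj. unfold gg.
  destruct (Nat.eq_dec j n) as [->|Hjn].
  - replace (S (n - 1)) with n by lia. rewrite Dd_n, Dd_small by lia. rewrite Dd_small by lia.
    replace (S (n-1)) with n by lia.
    unfold phibar. rewrite (proj2 (Nat.eqb_neq n 1)) by lia. rewrite Nat.eqb_refl.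
    rewrite delta_1. destruct n as [|[|m]]; [lia|lia|].
    rewrite delta_S by lia. replace (S (S m) - 1)%nat with (S m) by lia. field.
  - replace (S (j - 1)) with j by lia. rewrite !Dd_small by lia. replace (S (j-1)) with j by lia.
    unfold phibar. rewrite (proj2 (Nat.eqb_neq j n)) by lia.
    destruct (Nat.eq_dec j 1) as [->|Hj1].
    + simpl Nat.eqb. cbv iota. rewrite delta_1. rewrite delta_S by lia. field.
    + rewrite (proj2 (Nat.eqb_neq j 1)) by lia. rewrite delta_S by lia.
      destruct j as [|j']; [lia|]. rewrite delta_S by lia.
      replace (S j' + 1)%nat with (S (S j')) by lia. replace (S j' - 1)%nat with j' by lia. field.
Qed.

Lemma dextf (f g : R -> R) x l : (forall y, f y = g y) -> derivable_pt_lim f x l -> derivable_pt_lim g x l.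
Proof.
  intros E H eps He. destruct (H eps He) as [d Hd]. exists d. intros h Hh Hhd.
  rewrite <- !E. apply Hd; auto.
Qed.

Lemma rcextf (f g : R -> R) a : (forall y, f y = g y) -> right_cont_at f a -> right_cont_at g a.
Proof.
  intros E H eps He. destruct (H eps He) as [d [Hd Hd']]. exists d. split; auto.
  intros t Ht. rewrite <- !E. auto.
Qed.

Lemma rc_minus f g a : right_cont_at f a -> right_cont_at g a ->
  right_cont_at (fun t => f t - g t) a.
Proof.
  intros Hf Hg. apply (rcextf (fun t => f t + (-1) * g t)). intros; ring.
  apply rc_plus; auto. apply (rc_mult (fun _ => -1) g); auto. apply rc_const.
Qed.

Section Phase.
Variables (n : nat) (phi : nat -> R -> R) (omega kphi t0 : R).
Hypothesis Hn : (2 <= n)%nat.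
Hypothesis Hphi : forall i, (1 <= i <= n)%nat -> forall t, t0 < t ->
  derivable_pt_lim (phi i) t (omega + kphi * (phibar n phi i t - phi i t)).
Hypothesis Hphirc : forall i, (1 <= i <= n)%nat -> right_cont_at (phi i) t0.

Lemma Dd_deriv k t : (k < n)%nat -> t0 < t ->
  derivable_pt_lim (Dd n phi k) t (kphi / 2 * (gg n phi k t - gg n phi (k + n - 1) t)).
Proof.
  intros Hk Ht. rewrite Dd_small by auto.
  destruct k as [|k].
  - eapply dextf. intros y. symmetry. apply delta_1.
    eapply dext. apply dplus. apply dminus. apply Hphi; auto; lia. apply Hphi; auto; lia. apply dconst.
    rewrite !psi_eq by lia. replace (1 - 1)%nat with 0%nat by lia. replace (0 + n - 1)%nat with (n - 1)%nat by lia. field.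
  - eapply dextf. intros y. symmetry. apply delta_S. lia.
    eapply dext. apply dminus. apply Hphi; auto; lia. apply Hphi; auto; lia.
    rewrite !psi_eq by lia. replace (S k + n - 1)%nat with (k + n)%nat by lia. rewrite gg_per.
    replace (S (S k) - 1)%nat with (S k) by lia. replace (S k - 1)%nat with k by lia. field.
Qed.

Lemma gg_deriv k t : (k < n)%nat -> t0 < t ->
  derivable_pt_lim (gg n phi k) t (kphi / 2 * (gg n phi (S k) t - 2 * gg n phi k t + gg n phi (k + n - 1) t)).
Proof.
  intros Hk Ht. change (derivable_pt_lim (fun y => Dd n phi (S k) y - Dd n phi k y) t
    (kphi / 2 * (gg n phi (S k) t - 2 * gg n phi k t + gg n phi (k + n - 1) t))).
  destruct (Nat.eq_dec (S k) n) as [Hsk|Hsk].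
  - rewrite Hsk. rewrite Dd_n. eapply dext. apply dminus. apply Dd_deriv; auto; lia. apply Dd_deriv; auto.
    replace (0 + n - 1)%nat with k by lia. replace (k + n - 1)%nat with (k + n - 1)%nat by lia.
    pose proof (gg_per n phi 0) as E0. simpl in E0. rewrite <- E0. 
    replace (k + n - 1)%nat with ((k - 1) + n)%nat by lia. rewrite gg_per. ring.
  - eapply dext. apply dminus. apply Dd_deriv; auto; lia. apply Dd_deriv; auto.
    replace (S k + n - 1)%nat with (k + n)%nat by lia. rewrite gg_per. ring.
Qed.

Lemma delta_rc j : (1 <= j <= n)%nat -> right_cont_at (delta n phi j) t0.
Proof.
  intros Hj. destruct (Nat.eq_dec j 1) as [->|Hj1].
  - eapply rcextf. intros y; symmetry; apply delta_1.
    apply rc_plus. apply rc_minus; apply Hphirc; lia. apply rc_const.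
  - destruct j as [|j]; [lia|]. eapply rcextf. intros y; symmetry; apply delta_S; lia.
    apply rc_minus; apply Hphirc; lia.
Qed.

Lemma Dd_rc k : right_cont_at (Dd n phi k) t0.
Proof. unfold Dd. apply delta_rc. pose proof (Nat.mod_upper_bound k n ltac:(lia)). lia. Qed.

Lemma gg_rc k : right_cont_at (gg n phi k) t0.
Proof. apply (rc_minus (Dd n phi (S k)) (Dd n phi k)); apply Dd_rc. Qed.

Definition En t := sm (fun k => gg n phi k t ^ 2) n.

Lemma gg_sum t : sm (fun k => gg n phi k t) n = 0.
Proof. unfold gg. rewrite (sm_tele (fun k => Dd n phi k t)). rewrite Dd_n. ring. Qed.

Lemma En_decay t : t0 <= t -> 0 < kphi ->
  En t <= En t0 * exp (- (kphi / (4 * INR n ^ 3)) * (t - t0)).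
Proof.
  intros Ht Hk.
  assert (Hn3 : 0 < INR n ^ 3) by (apply pow_lt; apply lt_0_INR; lia).
  apply (decay En (fun s => - kphi * sm (fun k => (gg n phi (S k) s - gg n phi k s) ^ 2) n)); auto.
  - intros s Hs. unfold En. eapply dext. apply (sm_deriv (fun k s => gg n phi k s ^ 2)
      (fun k s => 2 * gg n phi k s * (kphi / 2 * (gg n phi (S k) s - 2 * gg n phi k s + gg n phi (k + n - 1) s)))).
    intros k Hk'. apply (dextf (fun y => gg n phi k y * gg n phi k y)). intros y; ring.
    eapply dext. apply dmult; apply gg_deriv; auto; lra. ring.
    transitivity (kphi * sm (fun k => gg n phi k s * (gg n phi (S k) s - 2 * gg n phi k s + gg n phi (k + n - 1) s)) n).
    { rewrite <- sm_scal; apply sm_ext; intros k0 Hk0. field. }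
    rewrite (cyc_id (fun k => gg n phi k s) n); [ring|lia|apply gg_per_t].
  - intros s Hs. pose proof (poincare (fun k => gg n phi k s) n ltac:(lia) (gg_per_t n phi s) (gg_sum s)).
    unfold En. set (Q := sm (fun k => (gg n phi (S k) s - gg n phi k s) ^ 2) n) in *.
    assert (sm (fun k => gg n phi k s ^ 2) n / (4 * INR n ^ 3) <= Q).
    { apply Rmult_le_reg_r with (4 * INR n ^ 3). lra. unfold Rdiv. rewrite Rmult_assoc, Rinv_l, Rmult_1_r by (apply Rgt_not_eq; lra). nra. }
    replace (- (kphi / (4 * INR n ^ 3)) * sm (fun k => gg n phi k s ^ 2) n) with
      (- kphi * (sm (fun k => gg n phi k s ^ 2) n / (4 * INR n ^ 3))) by (field; apply not_0_INR; lia).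
    nra.
  - unfold En. apply (sm_rc (fun k s => gg n phi k s ^ 2)). intros k _.
    apply (rcextf (fun y => gg n phi k y * gg n phi k y)). intros y; ring. apply rc_mult; apply gg_rc.
Qed.
End Phase.
Lemma Dd_eqmod n phi a b : a mod n = b mod n -> Dd n phi a = Dd n phi b.
Proof. intros H. unfold Dd. rewrite H. auto. Qed.

Lemma gg_mod n phi k t : gg n phi (k mod n) t = gg n phi k t.
Proof.
  unfold gg. rewrite (Dd_eqmod n phi (k mod n) k) by apply Nat.Div0.mod_mod.
  rewrite (Dd_eqmod n phi (S (k mod n)) (S k)); auto.
  replace (S (k mod n)) with (k mod n + 1)%nat by lia. rewrite Nat.Div0.add_mod_idemp_l. f_equal; lia.
Qed.

Lemma expconv_sq f L t0 E0 c K : 0 < c -> 0 <= K ->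
  (forall t, t0 <= t -> (f t - L) ^ 2 <= K * (E0 * exp (- c * (t - t0)))) -> exp_conv f L t0.
Proof.
  intros Hc HK H.
  assert (HE : 0 <= K * E0).
  { specialize (H t0 (Rle_refl _)). replace (- c * (t0 - t0)) with 0 in H by ring.
    rewrite exp_0, Rmult_1_r in H. pose proof (pow2_ge_0 (f t0 - L)). lra. }
  exists (sqrt (K * E0)), (c / 2). split; [lra|]. intros t Ht.
  specialize (H t Ht).
  assert (Hx : exp (- c * (t - t0)) = exp (- (c/2) * (t - t0)) * exp (- (c/2) * (t - t0))).
  { rewrite <- exp_plus. f_equal. field. }
  rewrite <- sqrt_Rsqr_abs. rewrite <- (sqrt_square (exp (- (c/2) * (t - t0)))) by (left; apply exp_pos).
  rewrite <- sqrt_mult_alt by auto. apply sqrt_le_1_alt. rewrite Rsqr_pow2. rewrite <- Hx. lra.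
Qed.

Lemma phase_conv n phi omega kphi t0 : (2 <= n)%nat -> 0 < kphi ->
  (forall i, (1 <= i <= n)%nat -> forall t, t0 < t ->
    derivable_pt_lim (phi i) t (omega + kphi * (phibar n phi i t - phi i t))) ->
  (forall i, (1 <= i <= n)%nat -> right_cont_at (phi i) t0) ->
  (forall k t, t0 <= t -> gg n phi k t ^ 2 <= En n phi t0 * exp (- (kphi / (4 * INR n ^ 3)) * (t - t0))) /\
  forall i, (1 <= i <= n)%nat ->
    exp_conv (fun t => phi i t - phibar n phi i t) 0 t0 /\
    exp_conv (fun t => omega + kphi * (phibar n phi i t - phi i t)) omega t0.
Proof.
  intros Hn Hk Hphi Hrc.
  assert (Hn3 : 0 < INR n ^ 3) by (apply pow_lt; apply lt_0_INR; lia).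
  assert (Hc : 0 < kphi / (4 * INR n ^ 3)) by (apply Rdiv_lt_0_compat; lra).
  assert (Hg : forall k t, t0 <= t -> gg n phi k t ^ 2 <= En n phi t0 * exp (- (kphi / (4 * INR n ^ 3)) * (t - t0))).
  { intros k t Ht. eapply Rle_trans. 2: apply (En_decay n phi omega kphi t0 Hn Hphi Hrc t Ht Hk).
    rewrite <- gg_mod.
    unfold En. apply (sm_term_le (fun k => gg n phi k t ^ 2)). intros; apply pow2_ge_0.
    apply Nat.mod_upper_bound; lia. }
  split; auto. intros i Hi. split.
  - apply (expconv_sq _ 0 t0 (En n phi t0) (kphi / (4 * INR n ^ 3)) (1/4)); auto; try lra.
    intros t Ht. replace (phi i t - phibar n phi i t - 0) with (- (phibar n phi i t - phi i t)) by ring.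
    rewrite (psi_eq n phi i t Hn Hi). specialize (Hg (i - 1)%nat t Ht). nra.
  - apply (expconv_sq _ omega t0 (En n phi t0) (kphi / (4 * INR n ^ 3)) (kphi ^ 2 / 4)); auto.
    apply Rmult_le_pos; [apply pow2_ge_0|lra].
    intros t Ht. replace (omega + kphi * (phibar n phi i t - phi i t) - omega) with (kphi * (phibar n phi i t - phi i t)) by ring.
    rewrite (psi_eq n phi i t Hn Hi). specialize (Hg (i - 1)%nat t Ht).
    replace ((kphi * (gg n phi (i - 1) t / 2)) ^ 2) with (kphi ^ 2 / 4 * gg n phi (i - 1) t ^ 2) by field.
    apply Rmult_le_compat_l; auto. apply Rmult_le_pos; [apply pow2_ge_0|lra].
Qed.

Lemma z_conv (f : R -> R) kz t0 : 0 < kz ->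
  (forall t, t0 < t -> derivable_pt_lim f t (- kz * f t)) -> right_cont_at f t0 -> exp_conv f 0 t0.
Proof.
  intros Hk Hd Hrc. apply (expconv_sq f 0 t0 (f t0 ^ 2) (2 * kz) 1); try lra.
  intros t Ht. rewrite Rminus_0_r, Rmult_1_l.
  apply (decay (fun t => f t ^ 2) (fun t => 2 * f t * (- kz * f t))); auto.
  - intros s Hs. apply (dextf (fun y => f y * f y)). intros; ring.
    eapply dext. apply dmult; apply Hd; lra. ring.
  - intros s Hs. right; ring.
  - apply (rcextf (fun y => f y * f y)). intros; ring. apply rc_mult; auto.
Qed.

Definition ng x := Rmin 0 x.

Lemma ng_sq_deriv x : derivable_pt_lim (fun y => ng y ^ 2) x (2 * ng x).
Proof.
  intros eps He. exists (mkposreal eps He). intros h Hh Hhe. simpl in Hhe.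
  assert (Hb : Rabs (ng (x + h) ^ 2 - ng x ^ 2 - 2 * ng x * h) <= h * h).
  { unfold ng, Rmin. destruct (Rle_dec 0 (x + h)); destruct (Rle_dec 0 x);
    rewrite Rabs_right || rewrite Rabs_left1; nra. }
  replace ((ng (x + h) ^ 2 - ng x ^ 2) / h - 2 * ng x) with ((ng (x + h) ^ 2 - ng x ^ 2 - 2 * ng x * h) / h) by (field; auto).
  unfold Rdiv. rewrite Rabs_mult, Rabs_inv.
  apply Rle_lt_trans with (h * h * / Rabs h).
  apply Rmult_le_compat_r; auto. left; apply Rinv_0_lt_compat; apply Rabs_pos_lt; auto.
  replace (h * h) with (Rabs h * Rabs h).
  2:{ rewrite <- Rabs_mult. apply Rabs_right. nra. }
  rewrite Rmult_assoc, Rinv_r, Rmult_1_r by (apply Rabs_no_R0; auto). auto.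
Qed.

Section MinP.
Variables (n : nat) (phi : nat -> R -> R) (omega kphi t0 : R).
Hypothesis Hn : (2 <= n)%nat.
Hypothesis Hk : 0 < kphi.
Hypothesis Hphi : forall i, (1 <= i <= n)%nat -> forall t, t0 < t ->
  derivable_pt_lim (phi i) t (omega + kphi * (phibar n phi i t - phi i t)).
Hypothesis Hphirc : forall i, (1 <= i <= n)%nat -> right_cont_at (phi i) t0.

Lemma Dd_deriv_all k t : t0 < t ->
  derivable_pt_lim (Dd n phi k) t (kphi / 2 * (gg n phi k t - gg n phi (k + n - 1) t)).
Proof.
  intros Ht. rewrite <- (Dd_eqmod n phi (k mod n) k) by apply Nat.Div0.mod_mod.
  eapply dext. apply (Dd_deriv n phi omega kphi t0 Hn Hphi); auto. apply Nat.mod_upper_bound; lia.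
  rewrite <- (gg_mod n phi k t). rewrite <- (gg_mod n phi (k + n - 1) t).
  rewrite <- (gg_mod n phi (k mod n + n - 1) t).
  replace (k + n - 1)%nat with (k + (n - 1))%nat by lia.
  replace (k mod n + n - 1)%nat with (k mod n + (n - 1))%nat by lia.
  rewrite Nat.Div0.add_mod_idemp_l. auto.
Qed.

Lemma Dd_rc_any k s : t0 <= s -> right_cont_at (Dd n phi k) s.
Proof.
  intros Hs. destruct (Req_dec s t0) as [->|Hne].
  - apply (Dd_rc n phi t0 Hn Hphirc).
  - apply rc_cont. eapply dcont. apply Dd_deriv_all. lra.
Qed.

Lemma min_principle s m : t0 <= s -> (forall k, (k < n)%nat -> m <= Dd n phi k s) ->
  forall t k, s <= t -> (k < n)%nat -> m <= Dd n phi k t.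
Proof.
  intros Hs Hm t k Hst Hkn.
  set (x := fun k t => Dd n phi k t - m).
  set (N := fun t => sm (fun k => ng (x k t) ^ 2) n).
  assert (Hxp : forall t, periodic (fun k => x k t) n).
  { intros t' k'. unfold x. rewrite Dd_per. auto. }
  assert (HN : N t <= N s * exp (- 0 * (t - s))).
  { apply (decay N (fun t => sm (fun k => 2 * ng (x k t) * (kphi / 2 * (gg n phi k t - gg n phi (k + n - 1) t))) n)); auto.
    - intros u Hu. unfold N. apply (sm_deriv (fun k t => ng (x k t) ^ 2)
        (fun k t => 2 * ng (x k t) * (kphi / 2 * (gg n phi k t - gg n phi (k + n - 1) t)))). intros k' _.
      apply (dcomp (fun t => x k' t) (fun y => ng y ^ 2)).
      unfold x. eapply dext. apply dminus. apply Dd_deriv_all. lra. apply dconst. ring.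
      apply ng_sq_deriv.
    - intros u Hu. rewrite Ropp_0, Rmult_0_l.
      set (w := fun k => ng (x k u)).
      assert (Hwp : periodic w n) by (intros k'; unfold w; rewrite Hxp; auto).
      apply Rle_trans with (kphi * sm (fun k => w k * (w (S k) - 2 * w k + w (k + n - 1)%nat)) n).
      + rewrite <- sm_scal. apply sm_le. intros k' _.
        assert (E1 : gg n phi k' u = x (S k') u - x k' u) by (unfold x, gg; ring).
        assert (E2 : gg n phi (k' + n - 1) u = x k' u - x (k' + n - 1)%nat u).
        { unfold x, gg. replace (S (k' + n - 1)) with (k' + n)%nat by lia. rewrite Dd_per. ring. }
        rewrite E1, E2. unfold w.
        assert (G : forall a b, ng a * b <= ng a * ng b).
        { intros a b. unfold ng, Rmin. destruct (Rle_dec 0 a); destruct (Rle_dec 0 b); nra. }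
        assert (G2 : forall a, ng a * a = ng a * ng a).
        { intros a. unfold ng, Rmin. destruct (Rle_dec 0 a); nra. }
        pose proof (G (x k' u) (x (S k') u)). pose proof (G (x k' u) (x (k' + n - 1)%nat u)).
        pose proof (G2 (x k' u)).
        nra.
      + rewrite cyc_id; auto; try lia.
        pose proof (sm_nonneg (fun k => (w (S k) - w k) ^ 2) n ltac:(intros; apply pow2_ge_0)). nra.
    - unfold N. apply (sm_rc (fun k t => ng (x k t) ^ 2)). intros k' _.
      apply (rc_comp (fun y => ng y ^ 2) (fun t => x k' t)).
      unfold x. apply rc_minus. apply Dd_rc_any; auto. apply rc_const.
      eapply dcont. apply ng_sq_deriv. }
  assert (HNs : N s = 0).
  { unfold N. replace 0 with (sm (fun _ => 0) n) by (rewrite sm_const; ring). apply sm_ext. intros k' Hk'.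
    unfold ng, x. specialize (Hm k' Hk'). rewrite Rmin_left by lra. ring. }
  rewrite HNs, Rmult_0_l in HN.
  assert (Ht : ng (x k t) ^ 2 <= 0).
  { eapply Rle_trans. apply (sm_term_le (fun k => ng (x k t) ^ 2) n). intros; apply pow2_ge_0. auto. exact HN. }
  unfold ng, x, Rmin in Ht. destruct (Rle_dec 0 (Dd n phi k t - m)); [lra|]. nra.
Qed.
End MinP.

Lemma fold_min_le a l : fold_right Rmin a l <= a /\ forall x, In x l -> fold_right Rmin a l <= x.
Proof.
  induction l as [|y l IH]; simpl. split; [lra| tauto].
  destruct IH as [H1 H2]. split.
  - eapply Rle_trans. apply Rmin_r. auto.
  - intros x [->|Hx]. apply Rmin_l. eapply Rle_trans. apply Rmin_r. auto.
Qed.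

Lemma fold_min_ge L a l : L <= a -> (forall x, In x l -> L <= x) -> L <= fold_right Rmin a l.
Proof.
  induction l as [|y l IH]; simpl; intros Ha Hl; auto.
  apply Rmin_glb. apply Hl; auto. apply IH; auto.
Qed.

Lemma dmin_le n phi t j : (1 <= j <= n)%nat -> delta_min n phi t <= delta n phi j t.
Proof.
  intros Hj. unfold delta_min. apply fold_min_le.
  apply (in_map (fun k => delta n phi k t)). apply in_seq. lia.
Qed.

Lemma dmin_ge n phi t L : (1 <= n)%nat -> (forall j, (1 <= j <= n)%nat -> L <= delta n phi j t) ->
  L <= delta_min n phi t.
Proof.
  intros Hn H. unfold delta_min. apply fold_min_ge. apply H; lia.
  intros x Hx. apply in_map_iff in Hx. destruct Hx as [j [<- Hj]]. apply in_seq in Hj. apply H. lia.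
Qed.

Lemma cos_le_dm dm th : 0 < dm <= PI -> dm <= Rabs th <= 2 * PI - dm -> cos th <= cos dm.
Proof.
  intros Hd Ht.
  assert (E : cos th = cos (Rabs th)).
  { destruct (Rle_dec 0 th). rewrite Rabs_right; lra. rewrite Rabs_left by lra. rewrite cos_neg; auto. }
  rewrite E. set (u := Rabs th) in *.
  destruct (Rle_dec u PI).
  - apply cos_decr_1; lra.
  - replace (cos u) with (cos (2 * PI - u)).
    apply cos_decr_1; lra.
    rewrite cos_minus, cos_2PI, sin_2PI. ring.
Qed.

Lemma key_D a b pa pb za zb dm r : 0 < r -> 0 < dm <= PI -> dm <= Rabs (pb - pa) <= 2 * PI - dm ->
  0 < a -> 0 < b ->
  (2 * r <= Rabs (a - b) \/ r / sin (dm / 2) + 2 * r <= b \/ r / sin (dm / 2) + 2 * r <= a) ->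
  2 * r < Dist a pa za b pb zb.
Proof.
  intros Hr Hdm Hth Ha Hb Hcase.
  set (s := sin (dm / 2)).
  assert (Hs : 0 < s) by (apply sin_gt_0; lra).
  assert (Hc : cos (pb - pa) <= cos dm) by (apply cos_le_dm; auto).
  assert (Hc2 : cos dm = 1 - 2 * s * s) by (unfold s; rewrite <- cos_2a_sin; f_equal; field).
  assert (HX : (a - b) ^ 2 + 4 * a * b * (s * s) <= a ^ 2 + b ^ 2 - 2 * a * b * cos (pb - pa) + (zb - za) ^ 2).
  { pose proof (pow2_ge_0 (zb - za)). assert (0 < a * b) by nra. nra. }
  assert (Hgoal : (2 * r) ^ 2 < (a - b) ^ 2 + 4 * a * b * (s * s)).
  { assert (Hab : 0 < a * b * (s * s)) by (apply Rmult_lt_0_compat; nra).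
    destruct (Rle_dec (2 * r) (Rabs (a - b))) as [H|H].
    - assert ((2 * r) ^ 2 <= (a - b) ^ 2).
      { rewrite <- (Rsqr_pow2 (a - b)), Rsqr_abs, Rsqr_pow2. apply pow_incr. lra. }
      nra.
    - assert (Hbig : r / s + 2 * r <= b \/ r / s + 2 * r <= a) by (destruct Hcase as [?|[?|?]]; [lra|auto|auto]).
      assert (Hrs : r / s * s = r) by (field; lra).
      assert (Hab2 : Rabs (a - b) < 2 * r) by lra. apply Rabs_def2 in Hab2.
      assert (a * s > r /\ b * s > r).
      { destruct Hbig as [Hb'|Ha'].
        - split. assert (a > r / s) by lra. apply Rmult_gt_compat_r with (r:=s) in H0; lra.
          assert (b * s >= r / s * s + 2 * r * s) by nra. nra.
        - split. assert (a * s >= r / s * s + 2 * r * s) by nra. nra.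
          assert (b > r / s) by lra. apply Rmult_gt_compat_r with (r:=s) in H0; lra. }
      destruct H0 as [H1 H2].
      assert (r * r < (a * s) * (b * s)) by (apply Rmult_le_0_lt_compat; lra).
      pose proof (pow2_ge_0 (a - b)). nra. }
  unfold Dist. rewrite <- (sqrt_pow2 (2 * r)) by lra.
  apply sqrt_lt_1_alt. split. apply pow2_ge_0. lra.
Qed.

Lemma fold_min_pos a l : 0 < a -> (forall x, In x l -> 0 < x) -> 0 < fold_right Rmin a l.
Proof.
  induction l as [|y l IH]; simpl; intros Ha Hl; auto.
  apply Rmin_glb_lt. apply Hl; auto. apply IH; auto.
Qed.

Lemma delta_Dd n phi j t : (1 <= j <= n)%nat -> delta n phi j t = Dd n phi (j - 1) t.
Proof. intros H. rewrite Dd_small by lia. f_equal. lia. Qed.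

Section Phases.
Variables (n : nat) (phi : nat -> R -> R) (omega kphi t0 : R).
Hypothesis Hn : (2 <= n)%nat.
Hypothesis Hk : 0 < kphi.
Hypothesis Hphi : forall i, (1 <= i <= n)%nat -> forall t, t0 < t ->
  derivable_pt_lim (phi i) t (omega + kphi * (phibar n phi i t - phi i t)).
Hypothesis Hphirc : forall i, (1 <= i <= n)%nat -> right_cont_at (phi i) t0.
Hypothesis Hpos : forall k, (1 <= k <= n)%nat -> 0 < delta n phi k t0.

Lemma dmin_mono s t : t0 <= s -> s <= t -> delta_min n phi s <= delta_min n phi t.
Proof.
  intros Hs Hst. apply dmin_ge. lia. intros j Hj. rewrite delta_Dd by auto.
  apply (min_principle n phi omega kphi t0 Hn Hk Hphi Hphirc s); auto; try lia.
  intros k Hk'. rewrite Dd_small by lia. apply dmin_le. lia.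
Qed.

Lemma dmin_pos t : t0 <= t -> 0 < delta_min n phi t.
Proof.
  intros Ht. apply Rlt_le_trans with (delta_min n phi t0); [|apply dmin_mono; lra].
  unfold delta_min. apply fold_min_pos. apply Hpos; lia.
  intros x Hx. apply in_map_iff in Hx. destruct Hx as [j [<- Hj]]. apply in_seq in Hj. apply Hpos. lia.
Qed.

Lemma delta_pos t j : t0 <= t -> (1 <= j <= n)%nat -> 0 < delta n phi j t.
Proof. intros Ht Hj. eapply Rlt_le_trans. apply dmin_pos; eauto. apply dmin_le; auto. Qed.

Lemma phi_mono t i j : t0 <= t -> (1 <= i)%nat -> (i <= j <= n)%nat -> phi i t <= phi j t.
Proof.
  intros Ht Hi Hij. destruct Hij as [Hij Hjn]. induction Hij. lra.
  assert (phi m t <= phi (S m) t).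
  { pose proof (delta_pos t (S m) Ht ltac:(lia)). rewrite delta_S in H by lia. lra. }
  assert (phi i t <= phi m t) by (apply IHHij; lia). lra.
Qed.

Lemma phi_gap t i j : t0 <= t -> (1 <= i)%nat -> (i < j <= n)%nat ->
  delta_min n phi t <= phi j t - phi i t <= 2 * PI - delta_min n phi t.
Proof.
  intros Ht Hi Hij. split.
  - destruct j as [|j]; [lia|].
    pose proof (dmin_le n phi t (S j) ltac:(lia)). rewrite delta_S in H by lia.
    pose proof (phi_mono t i j Ht Hi ltac:(lia)). lra.
  - pose proof (dmin_le n phi t 1 ltac:(lia)). rewrite delta_1 in H.
    pose proof (phi_mono t j n Ht ltac:(lia) ltac:(lia)).
    pose proof (phi_mono t 1 i Ht ltac:(lia) ltac:(lia)). lra.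
Qed.

Lemma dmin_le_pi t : t0 <= t -> delta_min n phi t <= PI.
Proof.
  intros Ht. pose proof (dmin_le n phi t 1 ltac:(lia)). pose proof (dmin_le n phi t 2 ltac:(lia)).
  rewrite delta_1 in H. rewrite delta_S in H0 by lia.
  pose proof (phi_mono t 2 n Ht ltac:(lia) ltac:(lia)). lra.
Qed.

Lemma phase_sep t i j : t0 <= t -> (1 <= i <= n)%nat -> (1 <= j <= n)%nat -> i <> j ->
  delta_min n phi t <= Rabs (phi j t - phi i t) <= 2 * PI - delta_min n phi t.
Proof.
  intros Ht Hi Hj Hij. pose proof (dmin_pos t Ht). destruct (Nat.lt_ge_cases i j).
  - pose proof (phi_gap t i j Ht ltac:(lia) ltac:(lia)). rewrite Rabs_right; lra.
  - pose proof (phi_gap t j i Ht ltac:(lia) ltac:(lia)). rewrite Rabs_left1; lra.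
Qed.

Lemma sigma_eq (r t : R) : t0 <= t -> Defs.sigma r n phi t = r / sin (delta_min n phi t / 2).
Proof.
  intros Ht. unfold Defs.sigma. rewrite Rabs_right; auto.
  pose proof (dmin_pos t Ht). pose proof (dmin_le_pi t Ht).
  left. apply sin_gt_0; lra.
Qed.

Lemma sigma_mono (r s t : R) : 0 < r -> t0 <= s -> s <= t -> Defs.sigma r n phi t <= Defs.sigma r n phi s.
Proof.
  intros Hr Hs Hst. rewrite !sigma_eq by lra.
  pose proof (dmin_pos s Hs). pose proof (dmin_le_pi t ltac:(lra)). pose proof (dmin_mono s t Hs Hst).
  pose proof (dmin_le_pi s Hs).
  assert (0 < sin (delta_min n phi s / 2)) by (apply sin_gt_0; lra).
  assert (sin (delta_min n phi s / 2) <= sin (delta_min n phi t / 2)) by (apply sin_incr_1; lra).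
  unfold Rdiv. apply Rmult_le_compat_l; [lra|]. apply Rinv_le_contravar; lra.
Qed.
End Phases.

Lemma lam_zero r e rh sg : rh < sg + 2 * r -> lam r e rh sg = 0.
Proof. intros H. unfold lam. destruct (Rlt_dec rh (sg + 2 * r)); [auto|lra]. Qed.

Lemma lam_bounds r e rh sg : 0 < e -> 0 <= lam r e rh sg <= 1.
Proof.
  intros He. unfold lam. destruct (Rlt_dec rh (sg + 2 * r)); [lra|].
  destruct (Rlt_dec (sg + 2 * r + e) rh); [lra|].
  split. apply Rmult_le_pos; [lra|left; apply Rinv_0_lt_compat; lra].
  apply Rmult_le_reg_r with e; auto. unfold Rdiv. rewrite Rmult_assoc, Rinv_l by lra. lra.
Qed.

Lemma lam_lower r e rh sg eta : 0 < e -> 0 < eta -> eta <= rh - sg - 2 * r -> Rmin 1 (eta / e) <= lam r e rh sg.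
Proof.
  intros He Heta H. unfold lam. destruct (Rlt_dec rh (sg + 2 * r)); [lra|].
  destruct (Rlt_dec (sg + 2 * r + e) rh). apply Rmin_l.
  eapply Rle_trans. apply Rmin_r. unfold Rdiv. apply Rmult_le_compat_r; [left; apply Rinv_0_lt_compat; lra|lra].
Qed.

Lemma rc_at_deriv (f : R -> R) f' t0 s : t0 <= s -> right_cont_at f t0 ->
  (forall t, t0 < t -> derivable_pt_lim f t (f' t)) -> right_cont_at f s.
Proof.
  intros Hs Hrc Hd. destruct (Req_dec s t0) as [->|Hne]; auto.
  apply rc_cont. eapply dcont. apply Hd. lra.
Qed.

Section Rho.
Variables (r e rhostar krho t0 : R) (sig rho : R -> R).
Hypothesis Hr : 0 < r.
Hypothesis He : 0 < e.
Hypothesis Hkr : 0 < krho.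
Hypothesis Hd : forall t, t0 < t ->
  derivable_pt_lim rho t (lam r e (rho t) (sig t) * krho * (rhostar - rho t)).
Hypothesis Hrc : right_cont_at rho t0.
Hypothesis Hsig : forall s t, t0 <= s -> s <= t -> sig t <= sig s.

Lemma rho_inv t1 : t0 <= t1 -> rho t1 = rho t0 \/ sig t1 + 2 * r <= rho t1.
Proof.
  intros Ht1. destruct (Rle_dec (sig t1 + 2 * r) (rho t1)) as [H|H]; [right; auto|left].
  set (c := sig t1 + 2 * r).
  set (N := fun t => ng (rho t - c) ^ 2).
  set (N' := fun t => 2 * ng (rho t - c) * (lam r e (rho t) (sig t) * krho * (rhostar - rho t))).
  assert (HN'0 : forall u, t0 < u <= t1 -> N' u = 0).
  { intros u Hu. unfold N', ng, Rmin. destruct (Rle_dec 0 (rho u - c)). ring.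
    rewrite lam_zero. ring. pose proof (Hsig u t1 ltac:(lra) ltac:(lra)). unfold c in *. lra. }
  assert (HdN : forall u, t0 < u <= t1 -> derivable_pt_lim N u (N' u)).
  { intros u Hu. unfold N, N'. eapply dext. apply (dcomp (fun t => rho t - c) (fun y => ng y ^ 2)).
    apply dminus. apply Hd; lra. apply dconst. apply ng_sq_deriv. ring. }
  assert (HrcN : right_cont_at N t0).
  { apply (rc_comp (fun y => ng y ^ 2) (fun t => rho t - c)). apply rc_minus; auto. apply rc_const.
    eapply dcont. apply ng_sq_deriv. }
  assert (H1 : N t1 <= N t0 * exp (- 0 * (t1 - t0))).
  { apply (decay N N'); auto. intros u Hu. rewrite HN'0; auto. pose proof (pow2_ge_0 (ng (rho u - c))). unfold N. lra. }
  assert (H2 : (fun t => - N t) t1 <= (fun t => - N t) t0 * exp (- 0 * (t1 - t0))).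
  { apply (decay (fun t => - N t) (fun t => - N' t)); auto.
    intros u Hu. apply (dextf (fun y => 0 - N y)). intros; ring. eapply dext. apply dminus. apply dconst. apply HdN; auto. ring.
    intros u Hu. rewrite HN'0; auto. lra.
    apply (rcextf (fun y => 0 - N y)). intros; ring. apply (rc_minus (fun _ => 0) N); auto. apply rc_const. }
  simpl in H2. replace (- 0 * (t1 - t0)) with 0 in H1, H2 by ring. rewrite exp_0 in H1, H2.
  assert (Heq : N t1 = N t0) by lra. unfold N, ng, Rmin in Heq.
  destruct (Rle_dec 0 (rho t1 - c)); [unfold c in *; lra|].
  destruct (Rle_dec 0 (rho t0 - c)). nra.
  assert ((rho t1 - c) ^ 2 - (rho t0 - c) ^ 2 = (rho t1 - rho t0) * (rho t1 + rho t0 - 2 * c)) by ring.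
  assert (Hz : (rho t1 - rho t0) * (rho t1 + rho t0 - 2 * c) = 0) by lra.
  apply Rmult_integral in Hz. destruct Hz; lra.
Qed.
End Rho.

Section Lin.
Variables (w L : R -> R) (a : R).
Hypothesis Hd : forall t, a < t -> derivable_pt_lim w t (- L t * w t).
Hypothesis HL : forall t, a < t -> 0 <= L t.
Hypothesis Hrc : right_cont_at w a.

Lemma lin_decay c t : 0 <= c -> (forall s, a < s -> c <= L s) -> a <= t ->
  w t ^ 2 <= w a ^ 2 * exp (- (2 * c) * (t - a)).
Proof.
  intros Hc HLc Ht.
  apply (decay (fun t => w t ^ 2) (fun t => 2 * w t * (- L t * w t))); auto.
  - intros s Hs. apply (dextf (fun y => w y * w y)). intros; ring.
    eapply dext. apply dmult; apply Hd; lra. ring.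
  - intros s Hs. specialize (HLc s ltac:(lra)). pose proof (pow2_ge_0 (w s)). nra.
  - apply (rcextf (fun y => w y * w y)). intros; ring. apply rc_mult; auto.
Qed.

Lemma lin_sign t : 0 <= w a -> a <= t -> 0 <= w t.
Proof.
  intros H0 Ht.
  assert (HN : ng (w t) ^ 2 <= ng (w a) ^ 2 * exp (- 0 * (t - a))).
  { apply (decay (fun t => ng (w t) ^ 2) (fun t => 2 * ng (w t) * (- L t * w t))); auto.
    - intros s Hs. apply (dcomp w (fun y => ng y ^ 2)). apply Hd; lra. apply ng_sq_deriv.
    - intros s Hs. specialize (HL s ltac:(lra)). unfold ng, Rmin. destruct (Rle_dec 0 (w s)); nra.
    - apply (rc_comp (fun y => ng y ^ 2) w); auto. eapply dcont. apply ng_sq_deriv. }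
  unfold ng, Rmin in HN. destruct (Rle_dec 0 (w a)); [|lra]. destruct (Rle_dec 0 (w t)); auto. nra.
Qed.
End Lin.

Section RhoConv.
Variables (r e rhostar krho t0 : R) (sig rho : R -> R).
Hypothesis Hr : 0 < r.
Hypothesis He : 0 < e.
Hypothesis Hkr : 0 < krho.
Hypothesis Hd : forall t, t0 < t ->
  derivable_pt_lim rho t (lam r e (rho t) (sig t) * krho * (rhostar - rho t)).
Hypothesis Hrc : right_cont_at rho t0.

Lemma rho_conv theta : theta + 2 * r < rhostar -> theta + 2 * r < rho t0 ->
  (forall eta, 0 < eta -> exists T, t0 <= T /\ forall t, T <= t -> sig t <= theta + eta) ->
  exp_conv rho rhostar t0.
Proof.
  intros H1 H2 Hev.
  set (L := fun t => krho * lam r e (rho t) (sig t)).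
  assert (HL : forall t, t0 < t -> 0 <= L t).
  { intros t _. unfold L. pose proof (lam_bounds r e (rho t) (sig t) He). nra. }
  set (y := fun t => rho t - rhostar).
  assert (Hy : forall t, t0 < t -> derivable_pt_lim y t (- L t * y t)).
  { intros t Ht. unfold y, L. eapply dext. apply dminus. apply Hd; auto. apply dconst. ring. }
  assert (Hyrc : right_cont_at y t0) by (apply rc_minus; auto; apply rc_const).
  assert (Hny : forall t, t0 < t -> derivable_pt_lim (fun t => - y t) t (- L t * (- y t))).
  { intros t Ht. apply (dextf (fun u => 0 - y u)). intros; ring.
    eapply dext. apply (dminus (fun _ => 0) y). apply dconst. apply Hy; auto. ring. }
  assert (Hnyrc : right_cont_at (fun t => - y t) t0).
  { apply (rcextf (fun u => 0 - y u)). intros; ring. apply (rc_minus (fun _ => 0) y); auto. apply rc_const. }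
  assert (Hsq : forall t, t0 <= t -> y t ^ 2 <= y t0 ^ 2).
  { intros t Ht. pose proof (lin_decay y L t0 Hy Hyrc 0 t ltac:(lra) ltac:(auto) Ht) as H.
    replace (- (2 * 0) * (t - t0)) with 0 in H by ring. rewrite exp_0 in H. lra. }
  set (m := Rmin (rho t0) rhostar).
  assert (Hm : forall t, t0 <= t -> m <= rho t).
  { intros t Ht. destruct (Rle_dec rhostar (rho t0)) as [Hc|Hc].
    - pose proof (lin_sign y L t0 Hy HL Hyrc t) as H. unfold y in H.
      assert (rhostar <= rho t) by (assert (0 <= rho t0 - rhostar) by lra; specialize (H H0 Ht); lra).
      unfold m. eapply Rle_trans. apply Rmin_r. auto.
    - pose proof (lin_sign (fun t => - y t) L t0 Hny HL Hnyrc t) as H. unfold y in H.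
      assert (Hyt : rho t <= rhostar) by (assert (0 <= - (rho t0 - rhostar)) by lra; specialize (H H0 Ht); lra).
      specialize (Hsq t Ht). unfold y in Hsq. unfold m. rewrite Rmin_left by lra. nra. }
  assert (Hmt : theta + 2 * r < m) by (unfold m; apply Rmin_glb_lt; auto).
  set (eta := (m - theta - 2 * r) / 2).
  assert (Heta : 0 < eta) by (unfold eta; lra).
  destruct (Hev eta Heta) as [T [HT HTs]].
  set (l0 := Rmin 1 (eta / e)).
  assert (Hl0 : 0 < l0) by (apply Rmin_glb_lt; [lra| apply Rdiv_lt_0_compat; lra]).
  assert (HLT : forall s, T < s -> krho * l0 <= L s).
  { intros s Hs. unfold L. apply Rmult_le_compat_l; [lra|]. apply lam_lower; auto.
    specialize (HTs s ltac:(lra)). specialize (Hm s ltac:(lra)). unfold eta in *. lra. }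
  set (c := 2 * (krho * l0)).
  assert (Hc : 0 < c) by (unfold c; nra).
  apply (expconv_sq rho rhostar t0 (y t0 ^ 2) c (exp (c * (T - t0)))); auto.
  { left; apply exp_pos. }
  intros t Ht. change ((y t) ^ 2 <= exp (c * (T - t0)) * (y t0 ^ 2 * exp (- c * (t - t0)))).
  destruct (Rle_dec t T) as [HtT|HtT].
  - assert (Hx : 1 <= exp (c * (T - t0)) * exp (- c * (t - t0))).
    { rewrite <- exp_plus. pose proof (exp_ineq1_le (c * (T - t0) + - c * (t - t0))). nra. }
    specialize (Hsq t Ht). pose proof (pow2_ge_0 (y t0)). nra.
  - assert (Hrt : right_cont_at y T).
    { apply (rc_at_deriv y (fun t => - L t * y t) t0 T); auto. }
    pose proof (lin_decay y L T ltac:(intros; apply Hy; lra) Hrt (krho * l0) t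
       ltac:(nra) HLT ltac:(lra)) as H.
    fold c in H. specialize (Hsq T HT).
    assert (E : exp (- c * (t - T)) = exp (c * (T - t0)) * exp (- c * (t - t0))).
    { rewrite <- exp_plus. f_equal. ring. }
    rewrite E in H. pose proof (exp_pos (c * (T - t0))). pose proof (exp_pos (- c * (t - t0))).
    apply Rle_trans with (y T ^ 2 * (exp (c * (T - t0)) * exp (- c * (t - t0)))); auto.
    replace (exp (c * (T - t0)) * (y t0 ^ 2 * exp (- c * (t - t0)))) with
      (y t0 ^ 2 * (exp (c * (T - t0)) * exp (- c * (t - t0)))) by ring.
    apply Rmult_le_compat_r; [nra|lra].
Qed.
End RhoConv.

Lemma abs_le_inv x a : Rabs x <= a -> - a <= x <= a.
Proof. unfold Rabs. destruct (Rcase_abs x); intros; lra. Qed.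

Lemma sin_lip a b : Rabs (sin a - sin b) <= Rabs (a - b).
Proof.
  assert (K : forall a b, a < b -> Rabs (sin b - sin a) <= b - a).
  { intros x y Hxy. destruct (MVT_cor2 sin cos x y Hxy) as [c [Hc _]].
    intros; apply derivable_pt_lim_sin.
    rewrite Hc, Rabs_mult, (Rabs_right (y - x)) by lra.
    pose proof (COS_bound c). assert (Rabs (cos c) <= 1) by (apply Rabs_le; lra). nra. }
  destruct (Rtotal_order a b) as [H|[H|H]].
  - rewrite <- Rabs_Ropp, Ropp_minus_distr, (Rabs_left (a - b)) by lra. specialize (K a b H). lra.
  - subst. rewrite !Rminus_diag, Rabs_R0. lra.
  - rewrite (Rabs_right (a - b)) by lra. apply K; auto.
Qed.

Lemma sum_Dd n phi t : (2 <= n)%nat -> sm (fun k => Dd n phi k t) n = 2 * PI.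
Proof.
  intros Hn.
  assert (H : forall m, (1 <= m <= n)%nat -> sm (fun k => Dd n phi k t) m = phi m t - phi n t + 2 * PI).
  { intros m Hm. destruct Hm as [H1 H2]. induction H1.
    - simpl. rewrite Dd_small by lia. rewrite delta_1. ring.
    - simpl. rewrite IHle by lia. rewrite Dd_small by lia. rewrite delta_S by lia. ring. }
  rewrite H by lia. ring.
Qed.

Section Ev.
Variables (n : nat) (phi : nat -> R -> R) (omega kphi t0 r : R).
Hypothesis Hn : (2 <= n)%nat.
Hypothesis Hk : 0 < kphi.
Hypothesis Hr : 0 < r.
Hypothesis Hphi : forall i, (1 <= i <= n)%nat -> forall t, t0 < t ->
  derivable_pt_lim (phi i) t (omega + kphi * (phibar n phi i t - phi i t)).
Hypothesis Hphirc : forall i, (1 <= i <= n)%nat -> right_cont_at (phi i) t0.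
Hypothesis Hpos : forall k, (1 <= k <= n)%nat -> 0 < delta n phi k t0.

Lemma gg_small b : 0 < b -> exists T, t0 <= T /\ forall t k, T <= t -> Rabs (gg n phi k t) <= b.
Proof.
  intros Hb. destruct (phase_conv n phi omega kphi t0 Hn Hk Hphi Hphirc) as [Hg _].
  set (c := kphi / (4 * INR n ^ 3)).
  assert (Hn3 : 0 < INR n ^ 3) by (apply pow_lt; apply lt_0_INR; lia).
  assert (Hc : 0 < c) by (unfold c; apply Rdiv_lt_0_compat; lra).
  set (E0 := En n phi t0).
  assert (HE0 : 0 <= E0) by (unfold E0, En; apply sm_nonneg; intros; apply pow2_ge_0).
  assert (Hb2 : 0 < b ^ 2 * c) by (apply Rmult_lt_0_compat; [apply pow_lt|]; auto).
  assert (HTT : 0 <= E0 / (b ^ 2 * c)) by (apply Rmult_le_pos; auto; left; apply Rinv_0_lt_compat; auto).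
  exists (t0 + E0 / (b ^ 2 * c)). split. lra.
  intros t k Ht. specialize (Hg k t ltac:(lra)).
  fold c E0 in Hg.
  assert (Hx : E0 <= b ^ 2 * c * (t - t0)).
  { assert (E0 / (b ^ 2 * c) <= t - t0) by lra.
    apply Rmult_le_compat_l with (r := b ^ 2 * c) in H; [|lra].
    replace (b ^ 2 * c * (E0 / (b ^ 2 * c))) with E0 in H by (field; split; lra). auto. }
  assert (Hexp : E0 * exp (- c * (t - t0)) <= b ^ 2).
  { pose proof (exp_ineq1_le (c * (t - t0))).
    assert (E : exp (- c * (t - t0)) * exp (c * (t - t0)) = 1) by (rewrite <- exp_plus; replace (- c * (t - t0) + c * (t - t0)) with 0 by ring; apply exp_0).
    pose proof (exp_pos (- c * (t - t0))). assert (0 <= t - t0) by lra. pose proof (pow2_ge_0 b).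
    assert (b ^ 2 * (c * (t - t0)) * exp (- c * (t - t0)) <= b ^ 2 * exp (c * (t - t0)) * exp (- c * (t - t0))).
    { apply Rmult_le_compat_r; [lra|]. apply Rmult_le_compat_l; [lra|lra]. }
    assert (E0 * exp (- c * (t - t0)) <= b ^ 2 * (c * (t - t0)) * exp (- c * (t - t0))).
    { apply Rmult_le_compat_r; lra. }
    nra. }
  apply Rsqr_le_abs_1 in Hexp || idtac.
  assert (gg n phi k t ^ 2 <= b ^ 2) by lra.
  apply Rabs_le. split; nra.
Qed.

Lemma sigma_ev eta : 0 < eta -> exists T, t0 <= T /\ (forall t, T <= t -> Defs.sigma r n phi t <= r / Rabs (sin (PI / INR n)) + eta).
Proof.
  intros Heta.
  assert (Hn2 : 2 <= INR n) by (replace 2 with (INR 2) by (simpl; ring); apply le_INR; lia).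
  set (x0 := PI / INR n).
  assert (Hx0 : 0 < x0 <= PI / 2).
  { unfold x0. pose proof PI_RGT_0. split. apply Rdiv_lt_0_compat; lra.
    unfold Rdiv. apply Rmult_le_compat_l; [lra|]. apply Rinv_le_contravar; lra. }
  set (s0 := sin x0).
  assert (Hs0 : 0 < s0) by (apply sin_gt_0; pose proof PI_RGT_0; lra).
  rewrite (Rabs_right s0) by lra.
  set (ep := Rmin (s0 / 2) (eta * s0 ^ 2 / (2 * r))).
  assert (Hep : 0 < ep) by (apply Rmin_glb_lt; [lra| apply Rdiv_lt_0_compat; [apply Rmult_lt_0_compat; [lra|apply pow_lt; lra]|lra]]).
  assert (Hep1 : ep <= s0 / 2) by apply Rmin_l.
  assert (Hep2 : ep <= eta * s0 ^ 2 / (2 * r)) by apply Rmin_r.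
  set (b := ep / INR n).
  assert (Hb : 0 < b) by (apply Rdiv_lt_0_compat; lra).
  destruct (gg_small b Hb) as [T [HT HTg]].
  exists T. split; auto. intros t Ht.
  assert (Ht0 : t0 <= t) by lra.
  assert (HD0 : forall k, (k <= n)%nat -> Rabs (Dd n phi k t - Dd n phi 0 t) <= ep).
  { intros k Hkn. rewrite <- (sm_tele (fun m => Dd n phi m t)). eapply Rle_trans. apply sm_abs.
    eapply Rle_trans. apply (sm_le _ (fun _ => b)). intros m _. apply HTg; auto.
    rewrite sm_const. unfold b. apply Rle_trans with (INR n * (ep / INR n)).
    apply Rmult_le_compat_r; [left; apply Rdiv_lt_0_compat; lra|apply le_INR; auto]. right; field; lra. }
  assert (HDk : forall k, (k < n)%nat -> 2 * PI / INR n - 2 * ep <= Dd n phi k t).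
  { intros k Hkn.
    assert (E : INR n * Dd n phi k t = sm (fun j => Dd n phi k t - Dd n phi j t) n + 2 * PI).
    { rewrite sm_minus, sm_const, sum_Dd by auto. ring. }
    assert (sm (fun j => - (2 * ep)) n <= sm (fun j => Dd n phi k t - Dd n phi j t) n).
    { apply sm_le. intros j Hj. pose proof (HD0 k ltac:(lia)). pose proof (HD0 j ltac:(lia)).
      apply abs_le_inv in H. apply abs_le_inv in H0. lra. }
    rewrite sm_const in H.
    apply Rmult_le_reg_l with (INR n). lra.
    replace (INR n * (2 * PI / INR n - 2 * ep)) with (INR n * - (2 * ep) + 2 * PI) by (field; lra). lra. }
  assert (Hdm1 : 2 * PI / INR n - 2 * ep <= delta_min n phi t).
  { apply dmin_ge. lia. intros j Hj. rewrite delta_Dd by auto. apply HDk. lia. }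
  assert (Hdm2 : delta_min n phi t <= 2 * PI / INR n).
  { assert (INR n * delta_min n phi t <= 2 * PI).
    { rewrite <- (sum_Dd n phi t Hn), <- sm_const. apply sm_le. intros k Hkn.
      rewrite Dd_small by auto. apply dmin_le. lia. }
    apply Rmult_le_reg_l with (INR n). lra. replace (INR n * (2 * PI / INR n)) with (2 * PI) by (field; lra). lra. }
  assert (Hsin : s0 - ep <= sin (delta_min n phi t / 2)).
  { pose proof (sin_lip (delta_min n phi t / 2) x0). fold s0 in H.
    assert (Rabs (delta_min n phi t / 2 - x0) <= ep).
    { apply Rabs_le. unfold x0. replace (2 * PI / INR n) with (2 * (PI / INR n)) in * by (field; lra). lra. }
    assert (Hh : Rabs (sin (delta_min n phi t / 2) - s0) <= ep) by lra.
    destruct (abs_le_inv _ _ Hh). lra. }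
  rewrite (sigma_eq n phi omega kphi t0 Hn Hk Hphi Hphirc Hpos r t Ht0).
  set (s := sin (delta_min n phi t / 2)) in *.
  assert (Hs : s0 / 2 <= s) by lra.
  assert (r / s - r / s0 <= eta).
  { replace (r / s - r / s0) with (r * (s0 - s) / (s * s0)) by (field; split; apply Rgt_not_eq; lra).
    destruct (Rle_dec s0 s).
    { apply Rle_trans with 0; [|lra]. unfold Rdiv. assert (0 < / (s * s0)) by (apply Rinv_0_lt_compat; nra). assert (r * (s0 - s) <= 0) by nra. nra. }
    apply Rle_trans with (r * ep / (s0 / 2 * s0)).
    - unfold Rdiv. apply Rmult_le_compat. nra. left; apply Rinv_0_lt_compat; nra. nra.
      apply Rinv_le_contravar; nra.
    - apply Rle_trans with (r * (eta * s0 ^ 2 / (2 * r)) / (s0 / 2 * s0)).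
      unfold Rdiv. apply Rmult_le_compat_r. left; apply Rinv_0_lt_compat; nra.
      apply Rmult_le_compat_l; lra. right; field; lra. }
  lra.
Qed.
End Ev.

Theorem mainTheorem10
  (n : nat) (r eps_r rhostar omega krho kz kphi t0 : R)
  (rho phi z : nat -> R -> R) :
  (2 <= n)%nat -> 0 < r -> 0 < eps_r -> 0 < rhostar ->
  0 < krho -> 0 < kz -> 0 < kphi ->
  closed_loop_solution n r eps_r rhostar omega krho kz kphi t0 rho phi z ->
  (forall k, (1 <= k <= n)%nat -> 0 < delta n phi k t0) ->
  (* (1) collision avoidance *)
  ((forall i, (1 <= i <= n)%nat -> r / Rabs (sin (PI / INR n)) + 2 * r < rho i t0) ->
   (forall i j, (1 <= i <= n)%nat -> (1 <= j <= n)%nat -> i <> j ->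
      2 * r <= Rabs (rho i t0 - rho j t0)) ->
   forall i j, (1 <= i <= n)%nat -> (1 <= j <= n)%nat -> i <> j ->
   forall t, t0 <= t ->
     2 * r < Dist (rho i t) (phi i t) (z i t) (rho j t) (phi j t) (z j t))
  /\
  (* (2) exponential convergence *)
  (forall i, (1 <= i <= n)%nat ->
     exp_conv (fun t => phi i t - phibar n phi i t) 0 t0 /\
     exp_conv (fun t => omega + kphi * (phibar n phi i t - phi i t)) omega t0 /\
     exp_conv (z i) 0 t0 /\
     (r / Rabs (sin (PI / INR n)) + 2 * r < rhostar ->
      r / Rabs (sin (PI / INR n)) + 2 * r < rho i t0 ->
      (forall j, (1 <= j <= n)%nat -> j <> i -> 2 * r <= Rabs (rho i t0 - rho j t0)) ->
      exp_conv (rho i) rhostar t0)).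
Proof.
  intros Hn Hr He Hrs Hkr Hkz Hk Hsol Hpos.
  assert (Hphi : forall i, (1 <= i <= n)%nat -> forall t, t0 < t ->
    derivable_pt_lim (phi i) t (omega + kphi * (phibar n phi i t - phi i t))).
  { intros i Hi t Ht. apply (Hsol i Hi). auto. }
  assert (Hphirc : forall i, (1 <= i <= n)%nat -> right_cont_at (phi i) t0) by (intros i Hi; apply (Hsol i Hi)).
  assert (Hsig : forall s t, t0 <= s -> s <= t -> Defs.sigma r n phi t <= Defs.sigma r n phi s).
  { intros s t Hs Hst. apply (sigma_mono n phi omega kphi t0 Hn Hk Hphi Hphirc Hpos); auto. }
  split.
  - intros Hinit Hsep i j Hi Hj Hij t Ht.
    set (dm := delta_min n phi t).
    assert (Hdm : 0 < dm <= PI).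
    { split. apply (dmin_pos n phi omega kphi t0 Hn Hk Hphi Hphirc Hpos t Ht).
      apply (dmin_le_pi n phi omega kphi t0 Hn Hk Hphi Hphirc Hpos t Ht). }
    assert (Hth : dm <= Rabs (phi j t - phi i t) <= 2 * PI - dm)
      by (apply (phase_sep n phi omega kphi t0 Hn Hk Hphi Hphirc Hpos t i j Ht Hi Hj Hij)).
    assert (Hsg : Defs.sigma r n phi t = r / sin (dm / 2))
      by (apply (sigma_eq n phi omega kphi t0 Hn Hk Hphi Hphirc Hpos r t Ht)).
    assert (Hsin : 0 < sin (dm / 2)) by (apply sin_gt_0; lra).
    assert (Hsg0 : 0 < r / sin (dm / 2)) by (apply Rdiv_lt_0_compat; lra).
    assert (Hth0 : 0 < r / Rabs (sin (PI / INR n))).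
    { apply Rdiv_lt_0_compat; auto. apply Rabs_pos_lt. apply Rgt_not_eq.
      assert (Hn2 : 2 <= INR n) by (replace 2 with (INR 2) by (simpl; ring); apply le_INR; lia).
      pose proof PI_RGT_0. apply sin_gt_0. apply Rdiv_lt_0_compat; lra.
      apply Rmult_lt_reg_r with (INR n). lra. unfold Rdiv. rewrite Rmult_assoc, Rinv_l by (apply Rgt_not_eq; lra). nra. }
    assert (Hinv : forall a, (1 <= a <= n)%nat -> rho a t = rho a t0 \/ r / sin (dm / 2) + 2 * r <= rho a t).
    { intros a Ha. rewrite <- Hsg.
      apply (rho_inv r eps_r rhostar krho t0 (Defs.sigma r n phi) (rho a)); auto.
      intros s Hs. apply (Hsol a Ha). auto. apply (Hsol a Ha). }
    assert (Hp : forall a, (1 <= a <= n)%nat -> 0 < rho a t).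
    { intros a Ha. destruct (Hinv a Ha) as [E|E]. rewrite E. specialize (Hinit a Ha). lra. lra. }
    apply (key_D _ _ _ _ _ _ dm r); auto.
    destruct (Hinv i Hi) as [Ei|Ei]; destruct (Hinv j Hj) as [Ej|Ej]; auto.
    left. rewrite Ei, Ej. apply Hsep; auto.
  - intros i Hi.
    destruct (phase_conv n phi omega kphi t0 Hn Hk Hphi Hphirc) as [_ Hpc].
    destruct (Hpc i Hi) as [P1 P2]. split; [auto|split; [auto|split]].
    + apply (z_conv (z i) kz t0 Hkz). intros t Ht. apply (Hsol i Hi). auto. apply (Hsol i Hi).
    + intros H1 H2 _.
      apply (rho_conv r eps_r rhostar krho t0 (Defs.sigma r n phi) (rho i)) with (theta := r / Rabs (sin (PI / INR n))); auto.
      intros t Ht. apply (Hsol i Hi). auto. apply (Hsol i Hi).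
      intros eta Heta. apply (sigma_ev n phi omega kphi t0 r Hn Hk Hr Hphi Hphirc Hpos eta Heta).
Qed.
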